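(* Let $B$ be a metric space, $\mu$ a measure on $B$, let $c,v>0$ satisfy $c=\frac{v-n}{n(v+1)}$, and let $f:B\to\mathbb R^n$ be a map such that the following condition fails: ''for every $d>c$ there exists $T>0$ such that for all $t\ge T$ and all $\Gamma\in\mathfrak P_{n+1}$, $\|g_tu_{f(\cdot)}\Gamma\|_{\mu,B}\ge e^{-\mathrm{rk}(\Gamma)dt}$.'' Then there exists $u>v$ such that $f(B\cap\operatorname{supp}\mu)\subset\mathcal W_u$.
   Context: For a row vector $y\in\mathbb R^n$, $u_y=\begin{pmatrix}1&y\\0&I_n\end{pmatrix}$ and $g_t=\mathrm{diag}(e^t,e^{-t/n},\dots,e^{-t/n})$, acting on column vectors of $\mathbb R^{n+1}$. $\mathfrak P_{n+1}$ is the set of nonzero primitive subgroups of $\mathbb Z^{n+1}$; $\mathrm{rk}$ is rank; $\|\Gamma\|$ is the Euclidean covolume of $\Gamma$ in its real span. $\|g\|_{\mu,B}=\sup_{B\cap\operatorname{supp}\mu}|g|$. For $u>0$, $\mathcal W_u$ is the set of $y\in\mathbb R^n$ for which there are infinitely many $q\in\mathbb Z^n$ with $|\sum y_iq_i+p|<\|q\|^{-u}$ for some $p\in\mathbb Z$. *)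

(* Defs.v *)
From HB Require Import structures.
From mathcomp Require Import all_boot all_order all_algebra.
From mathcomp Require Import all_classical all_reals all_analysis.
Set Implicit Arguments. Unset Strict Implicit. Unset Printing Implicit Defensive.
Import Order.TTheory GRing.Theory Num.Theory.
Import numFieldNormedType.Exports.
Local Open Scope classical_set_scope.
Local Open Scope ring_scope.

Section Defs.
Variable R : realType.

Definition u_mx (n : nat) (y : 'rV[R]_n) : 'M[R]_(1 + n) :=
  block_mx 1%:M y 0 1%:M.

Definition g_mx (n : nat) (t : R) : 'M[R]_(1 + n) :=
  \matrix_(i, j) (if i == j then
                   (if (i : nat) == 0%N then expR t else expR (- (t / n%:R)))
                 else 0).

Definition int_vec (m : nat) : set 'cV[R]_m :=
  [set v | forall i, exists z : int, v i 0 = z%:~R].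

Definition real_span (m : nat) (G : set 'cV[R]_m) : set 'cV[R]_m :=
  [set v | exists (k : nat) (M : 'M[R]_(m, k)) (a : 'cV[R]_k),
      (forall j, G (col j M)) /\ v = M *m a].

Definition subgroup_Zm (m : nat) (G : set 'cV[R]_m) : Prop :=
  G `<=` @int_vec m /\ G 0 /\ (forall x y, G x -> G y -> G (x - y)).

Definition primitive_subgroup (m : nat) (G : set 'cV[R]_m) : Prop :=
  subgroup_Zm G /\ G <> [set 0] /\ G = real_span G `&` @int_vec m.

Definition Zspan (m k : nat) (M : 'M[R]_(m, k)) : set 'cV[R]_m :=
  [set M *m map_mx (fun z : int => z%:~R) z | z in [set: 'cV[int]_k]].

(* the columns of M : 'M_(m,k) form a Z-basis of G (so rk G = k) *)
Definition is_basis (m k : nat) (G : set 'cV[R]_m) (M : 'M[R]_(m, k)) : Prop :=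
  \rank M = k /\ G = Zspan M.

(* Euclidean covolume, in its real span, of the lattice with basis the
   columns of M: sqrt(det(M^T M)) *)
Definition covol (m k : nat) (M : 'M[R]_(m, k)) : R :=
  Num.sqrt (\det (M^T *m M)).

Definition supp (B : pseudoPMetricType R)
  (mu : {measure set (g_sigma_algebraType (@open B)) -> \bar R}) : set B :=
  [set x | forall U : set B, open U -> U x -> (0 < mu U)%E].

Definition supnorm (B : pseudoPMetricType R)
  (mu : {measure set (g_sigma_algebraType (@open B)) -> \bar R})
  (h : B -> R) : \bar R :=
  ereal_sup [set (`|h x|)%:E | x in supp mu].

Definition eucl_norm (n : nat) (q : 'rV[int]_n) : R :=
  Num.sqrt (\sum_(i < n) ((q 0 i)%:~R) ^+ 2).

Definition W_set (n : nat) (u : R) : set 'rV[R]_n :=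
  [set y | infinite_set [set q : 'rV[int]_n | exists p : int,
      `| \sum_(i < n) y 0 i * (q 0 i)%:~R + p%:~R | < eucl_norm q `^ (- u)]].

End Defs.

(* Main.v *)
Require Import Defs.
From HB Require Import structures.
From mathcomp Require Import all_boot all_order all_algebra.
From mathcomp Require Import all_classical all_reals all_analysis.
From mathcomp Require Import ring lra.
Import Order.TTheory GRing.Theory Num.Theory.
Import numFieldNormedType.Exports.
Local Open Scope classical_set_scope.
Local Open Scope ring_scope.

Set Implicit Arguments. Unset Strict Implicit.
Section Herm.
Variable R : realType.

Definition qf k (G : 'M[R]_k) (z : 'cV[R]_k) : R := (z^T *m G *m z) 0 0.
Definition zr k (z : 'cV[int]_k) : 'cV[R]_k := map_mx intr z.

Lemma mul11 p q (X : 'M[R]_(p,1)) (Y : 'M[R]_(1,q)) i j :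
  (X *m Y) i j = X i 0 * Y 0 j.
Proof. by rewrite !mxE big_ord1. Qed.

Lemma mxDe m n (A B : 'M[R]_(m,n)) i j : (A + B) i j = A i j + B i j.
Proof. by rewrite mxE. Qed.
Lemma mxBe m n (A B : 'M[R]_(m,n)) i j : (A - B) i j = A i j - B i j.
Proof. by rewrite !mxE. Qed.
Lemma mxNe m n (A : 'M[R]_(m,n)) i j : (- A) i j = - A i j.
Proof. by rewrite mxE. Qed.
Lemma mxZe m n c (A : 'M[R]_(m,n)) i j : (c *: A) i j = c * A i j.
Proof. by rewrite mxE. Qed.
Lemma mxSe (c : R) i j : (c%:M : 'M[R]_1) i j = c.
Proof. by rewrite mxE !ord1 mulr1n. Qed.

Lemma qf_mul k (G U : 'M[R]_k) z : qf (U^T *m G *m U) z = qf G (U *m z).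
Proof. by rewrite /qf trmx_mul !mulmxA. Qed.

Lemma qf_scale k (G : 'M[R]_k) (c : R) z : qf G (c *: z) = c ^+ 2 * qf G z.
Proof.
rewrite /qf.
have -> : (c *: z)^T = c *: z^T by apply/matrixP=> i j; rewrite !mxE.
rewrite -!scalemxAl -scalemxAr !mxE; ring.
Qed.

Lemma qf_block k (G : 'M[R]_(1 + k)) : G^T = G -> ulsubmx G 0 0 != 0 ->
  forall (x : R) (y : 'cV[R]_k),
  qf G (col_mx x%:M y) =
    ulsubmx G 0 0 * (x + ((dlsubmx G)^T *m y) 0 0 / ulsubmx G 0 0) ^+ 2
    + qf (drsubmx G - (ulsubmx G 0 0)^-1 *: (dlsubmx G *m (dlsubmx G)^T)) y.
Proof.
move=> Gs a0 x y.
have hur : ursubmx G = (dlsubmx G)^T by rewrite trmx_dlsub Gs.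
rewrite /qf -{1}(submxK G) tr_col_mx mul_row_block mul_row_col hur.
set b := dlsubmx G; set D := drsubmx G; set A := ulsubmx G; set a := A 0 0.
have hyb : (y^T *m b) 0 0 = (b^T *m y) 0 0.
  by rewrite -[y^T *m _]trmxK trmx_mul trmxK mxE.
rewrite mulmxDl mulmxDl mulmxBr mulmxBl !mxDe mxNe.
have -> : y^T *m (a^-1 *: (b *m b^T)) *m y = a^-1 *: ((y^T *m b) *m (b^T *m y)).
  by rewrite -!scalemxAr -!scalemxAl !mulmxA.
rewrite mxZe tr_scalar_mx.
rewrite (mul11 (y^T *m b) (b^T *m y)) (mul11 (y^T *m b) x%:M) hyb.
rewrite -(mulmxA _ b^T y) !mul11 !mxSe.
set be := (b^T *m y) 0 0. set T := (y^T *m D *m y) 0 0.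
rewrite -/a.
field. all: try done.
Qed.

Lemma det_block k (G : 'M[R]_(1 + k)) : G^T = G -> ulsubmx G 0 0 != 0 ->
  \det G = ulsubmx G 0 0 *
    \det (drsubmx G - (ulsubmx G 0 0)^-1 *: (dlsubmx G *m (dlsubmx G)^T)).
Proof.
move=> Gs a0.
have hur : ursubmx G = (dlsubmx G)^T by rewrite trmx_dlsub Gs.
set b := dlsubmx G; set D := drsubmx G; set A := ulsubmx G; set a := A 0 0.
set S := D - _.
have -> : G = block_mx 1%:M 0 (a^-1 *: b) 1%:M *m block_mx A b^T 0 S.
  rewrite mulmx_block !mul1mx !mul0mx !addr0.
  rewrite [X in _ *: b *m X]mx11_scalar mul_mx_scalar -/a scalerA mulfV // scale1r.
  rewrite /S -scalemxAl addrC subrK.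
  by rewrite -hur submxK.
by rewrite det_mulmx det_lblock det_ublock !det1 det_mx11 !mul1r.
Qed.

Lemma prim m (z : 'cV[int]_m.+1) : z != 0 ->
  exists L : 'M[int]_m.+1, L \in unitmx /\
    exists c : int, c != 0 /\ z = c *: (L *m delta_mx 0 0).
Proof.
move=> nz; have [L Lu [Rm Ru [d _ hz]]] := int_Smith_normal_form z.
exists L; split => //.
have hD : (\matrix_(i, j) (d`_i *+ (i == j :> nat)) : 'M[int]_(m.+1, 1))
    = d`_0 *: delta_mx 0 0.
  apply/matrixP => i j; rewrite !mxE (ord1 j) /=.
  case: (eqVneq i 0) => [->|ne] /=; first by rewrite mulr1 mulr1n.
  have -> : (nat_of_ord i == 0)%N = false.
    by apply/negbTE; apply: contra ne => /eqP h; apply/eqP; apply/val_inj.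
  by rewrite mulr0 mulr0n.
rewrite hD [Rm]mx11_scalar mul_mx_scalar -scalemxAr scalerA in hz.
exists (Rm 0 0 * d`_0); split => //.
by apply: contra nz => /eqP h; rewrite hz h scale0r.
Qed.


Lemma zr_eq0 k (z : 'cV[int]_k) : (zr z == 0) = (z == 0).
Proof.
apply/eqP/eqP => [h|->]; last by rewrite /zr map_mx0.
apply/matrixP => i j; have := congr1 (fun A : 'cV[R]_k => A i j) h.
by rewrite !mxE => /eqP; rewrite intr_eq0 => /eqP.
Qed.

Definition PD k (G : 'M[R]_k) := forall z, z != 0 -> 0 < qf G z.

Fixpoint Ch (k : nat) : R := if k is k'.+1 then 4 ^+ k'.+1 * Ch k' else 1.

Lemma Ch_gt0 k : 0 < Ch k.
Proof. by elim: k => [|k IH] //=; rewrite mulr_gt0 // exprn_gt0. Qed.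

Lemma unit_sq (x : int) : x \is a GRing.unit -> x * x = 1.
Proof. by move=> /orP [] /eqP ->. Qed.

Lemma qf_delta k (G : 'M[R]_k.+1) : qf G (delta_mx 0 0) = G 0 0.
Proof. by rewrite /qf trmx_delta -rowE -colE !mxE. Qed.

Lemma intsq_ge1 (c : int) : c != 0 -> 1 <= (c%:~R : R) ^+ 2.
Proof.
move=> cn0; rewrite -rmorphXn ler1z -gtz0_ge1.
by rewrite exprn_even_gt0 // cn0 orbT.
Qed.


Lemma hermite k : forall G : 'M[R]_k.+1, G^T = G -> PD G ->
  0 < \det G /\ exists z : 'cV[int]_k.+1, z != 0 /\
    qf G (zr z) ^+ k.+1 <= Ch k * \det G.
Proof.
elim: k => [|k IH] G Gs Gpd.
  have h1 : 0 < G 0 0.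
    have := Gpd 1%:M (oner_neq0 _).
    by rewrite /qf trmx1 mul1mx mulmx1.
  split; first by rewrite det_mx11.
  exists 1%:M; split; first exact: oner_neq0.
  by rewrite /zr map_mx1 /qf trmx1 mul1mx mulmx1 expr1 mul1r det_mx11.
set E := [set x : R | exists w : 'cV[int]_k.+2, w != 0 /\ x = qf G (zr w)].
have Elb : forall x, E x -> 0 < x.
  by move=> x [w [wn0 ->]]; apply: Gpd; rewrite zr_eq0.
have dn0 : (delta_mx 0 0 : 'cV[int]_k.+2) != 0.
  apply/eqP => /matrixP /(_ 0 0); rewrite !mxE eqxx /= => /eqP.
  by rewrite oner_eq0.
have Einf : has_inf E.
  split; first by exists (qf G (zr (delta_mx 0 0))); exists (delta_mx 0 0).
  by exists 0 => x /Elb /ltW.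
have [z [zn0 hz]] : exists z : 'cV[int]_k.+2, z != 0 /\
    (0 < inf E -> qf G (zr z) < 2 * inf E).
  case: (ltP 0 (inf E)) => hi.
    have [e [w [wn0 ->]] he] := inf_adherent hi Einf.
    by exists w; split => // _; lra.
  by exists (delta_mx 0 0); split => // h; lra.
have [L [Lu [c [cn0 hzc]]]] := prim zn0.
pose z1 : 'cV[int]_k.+2 := L *m delta_mx 0 0.
rewrite -/z1 in hzc.
set U := map_mx (fun x : int => x%:~R : R) L.
have Uu : U \in unitmx by rewrite unitmxE det_map_mx rmorph_unit // -unitmxE.
have hUz : forall w, zr (L *m w) = U *m zr w by move=> w; rewrite /zr map_mxM.
have Uinj : forall y : 'cV[R]_k.+2, y != 0 -> U *m y != 0.
  move=> y yn0; apply/eqP => h; move/eqP: yn0; apply.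
  by rewrite -(mulKmx Uu y) h mulmx0.
set G' := U^T *m G *m U.
have G's : G'^T = G' by rewrite /G' !trmx_mul trmxK Gs mulmxA.
have G'pd : PD G' by move=> y yn0; rewrite /G' qf_mul; apply: Gpd; exact: Uinj.
have detG' : \det G' = \det G.
  have hU2 : \det U * \det U = 1.
    by rewrite det_map_mx -rmorphM unit_sq // -unitmxE.
  rewrite /G' !det_mulmx det_tr.
  transitivity (\det U * \det U * \det G); first ring.
  by rewrite hU2 mul1r.
pose G2 : 'M[R]_(1 + k.+1) := G'.
have G2s : G2^T = G2 := G's.
set a := ulsubmx G2 0 0.
have z1n0 : z1 != 0.
  by apply: contra zn0 => /eqP h; rewrite hzc h scaler0.
have ha : a = qf G (zr z1).
  rewrite hUz -qf_mul /zr map_delta_mx qf_delta -/G' /a mxE.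
  by rewrite mxE /G2; f_equal; apply: val_inj.
have apos : 0 < a by rewrite ha; apply: Gpd; rewrite zr_eq0.
have a0 : a != 0 by rewrite gt_eqF.
set b := dlsubmx G2.
set S := drsubmx G2 - a^-1 *: (b *m b^T).
have Ss : S^T = S.
  rewrite /S linearB /= linearZ /= trmx_mul trmxK trmx_drsub G2s.
  by [].
have Spd : PD S.
  move=> y yn0.
  have hnz : col_mx ((- ((b^T *m y) 0 0 / a))%:M) y != 0.
    by rewrite col_mx_eq0 negb_and yn0 orbT.
  have := G'pd _ hnz.
  have -> : qf G' (col_mx ((- ((b^T *m y) 0 0 / a))%:M) y) =
            qf G2 (col_mx ((- ((b^T *m y) 0 0 / a))%:M) y) by [].
  by rewrite (qf_block G2s a0) -/a -/b -/S addNr expr0n /= mulr0 add0r.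
have [dS [z'' [z''n0 hz'']]] := IH S Ss Spd.
have detG : \det G = a * \det S.
  by rewrite -detG' -(det_block G2s a0).
have detpos : 0 < \det G by rewrite detG mulr_gt0.
split => //.
case: (ltP 0 (inf E)) => hi; last first.
  set eps := Num.min 1 (Ch k.+1 * \det G).
  have epos : 0 < eps by rewrite lt_min ltr01 mulr_gt0 // Ch_gt0.
  have [e [w [wn0 he]] hle] := inf_adherent epos Einf.
  exists w; split => //; rewrite -he.
  have e0 : 0 < e by apply: Elb; exists w.
  have e1 : e <= eps by lra.
  have : eps <= 1 by rewrite ge_min lexx.
  have : eps <= Ch k.+1 * \det G by rewrite ge_min lexx orbT.
  move=> h1 h2.
  rewrite exprS.
  have : e ^+ k.+1 <= 1 by rewrite exprn_ile1 //; [exact: ltW | lra].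
  move=> h3; nra.
exists z1; split => //; rewrite -ha.
set v := qf S (zr z'').
set be := (b^T *m zr z'') 0 0.
set m := Num.floor (be / a + 2^-1).
pose cz : 'cV[int]_k.+2 := col_mx ((- m)%:M) z''.
pose w := L *m cz.
have wn0 : w != 0.
  apply/eqP => h.
  have : cz = 0 by rewrite -(mulKmx Lu cz) -/w h mulmx0.
  move=> hc; move/eqP: z''n0; apply.
  have := congr1 (@dsubmx _ 1 k.+1 1) hc; rewrite /cz col_mxKd => ->.
  by apply/matrixP => i j; rewrite !mxE.
have hq : qf G (zr w) = a * ((- m)%:~R + be / a) ^+ 2 + v.
  have hcz : zr cz = (col_mx ((- m)%:~R%:M) (zr z'') : 'cV[R]_k.+2).
    transitivity (map_mx (fun x : int => x%:~R : R)
       (col_mx ((- m)%:M) z'' : 'cV[int]_(1 + k.+1))); first by [].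
    by rewrite map_col_mx map_scalar_mx.
  rewrite hUz -qf_mul hcz -/G'.
  exact: (qf_block G2s a0 _ _).
have hfl : ((- m)%:~R + be / a) ^+ 2 <= 4^-1 :> R.
  have f1 := floor_le (be / a + 2^-1).
  have f2 := floorD1_gt (be / a + 2^-1).
  rewrite -/m in f1 f2; rewrite intrD in f2.
  rewrite intrN; nra.
have hinf : inf E <= qf G (zr w) by apply: (ge_inf Einf.2); exists w.
have hza : a <= qf G (zr z).
  rewrite ha hzc /zr map_mxZ qf_scale.
  have := intsq_ge1 cn0; have : 0 < qf G (zr z1) by rewrite -ha.
  rewrite /zr => p1 p2; nra.
have h2 := hz hi.
have hv : 0 <= v by rewrite /v; apply: ltW; apply: Spd; rewrite zr_eq0.
have a4v : a <= 4 * v.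
  have : a * ((- m)%:~R + be / a) ^+ 2 <= a * 4^-1 by rewrite ler_pM2l.
  move=> h3; rewrite hq in hinf; lra.
have h4 : a ^+ k.+1 <= (4 * v) ^+ k.+1.
  by apply: lerXn2r => //; rewrite nnegrE; lra.
rewrite exprMn in h4.
rewrite detG /= exprS.
have h5 : 4 ^+ k.+1 * v ^+ k.+1 <= 4 ^+ k.+1 * (Ch k * \det S).
  by rewrite ler_pM2l // exprn_gt0.
have h6 : a ^+ k.+1 <= 4 ^+ k.+1 * (Ch k * \det S) by apply: le_trans h4 h5.
have := ler_wpM2l (ltW apos) h6.
move=> h7; apply: (le_trans h7); rewrite le_eqVlt; apply/orP; left; apply/eqP; ring.
Qed.

End Herm.

Section Mat.
Variable R : realType.

Lemma g_block n t : g_mx n t =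
  block_mx (expR t)%:M 0 0 (expR (- (t / n%:R)))%:M :> 'M[R]_(1 + n).
Proof.
apply/matrixP => i j; rewrite !mxE.
case: (splitP i) => i' hi; rewrite !mxE; case: (splitP j) => j' hj; rewrite !mxE.
- rewrite !ord1 in hi hj *; rewrite /= mulr1n.
  have -> : i == j by apply/eqP/val_inj; rewrite /= hi hj.
  by have -> : (nat_of_ord i == 0)%N by rewrite hi.
- rewrite ord1 in hi; have -> : (i == j) = false.
    by apply/negbTE; apply/eqP => /(congr1 val); rewrite /= hi hj.
  by [].
- rewrite ord1 in hj; have -> : (i == j) = false.
    by apply/negbTE; apply/eqP => /(congr1 val); rewrite /= hi hj.
  by [].
- have -> : (nat_of_ord i == 0)%N = false by rewrite hi.
  have -> : (i == j) = (i' == j') by rewrite -val_eqE /= hi hj eqn_add2l.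
  by case: (i' == j') => //=; rewrite mulr1n.

Qed.

Lemma Aw_norm n t (y : 'rV[R]_n) (w : 'cV[R]_(1 + n)) :
  let A := g_mx n t *m u_mx y in
  ((A *m w)^T *m (A *m w)) 0 0 =
    (expR t * (usubmx w 0 0 + (y *m dsubmx w) 0 0)) ^+ 2 +
    expR (- (t / n%:R)) ^+ 2 * ((dsubmx w)^T *m dsubmx w) 0 0.
Proof.
move=> A; rewrite /A -mulmxA -[w]vsubmxK /u_mx g_block.
rewrite mul_block_col mul_block_col !mul1mx !mul0mx !add0r !addr0.
rewrite !mul_scalar_mx tr_col_mx mul_row_col !linearZ /= -!scalemxAl mxDe !mxZe.
rewrite mul11 !mxDe vsubmxK.
set a := usubmx w 0 0. set b := (y *m dsubmx w) 0 0.
rewrite [(_ + _)^T 0 0]mxE mxDe -/a -/b; ring.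
Qed.

Lemma A_unit n t (y : 'rV[R]_n) : (g_mx n t *m u_mx y) \in unitmx.
Proof.
rewrite unitmxE det_mulmx g_block /u_mx !det_ublock !det_scalar ?det1 !expr1n ?mulr1 ?mul1r.
by rewrite unitfE mulf_neq0 // ?expf_neq0 // gt_eqF // expR_gt0.
Qed.

Lemma sumsq_pos m (y : 'cV[R]_m) : y != 0 -> 0 < (y^T *m y) 0 0.
Proof.
move=> yn0.
have -> : (y^T *m y) 0 0 = \sum_i y i 0 ^+ 2.
  by rewrite mxE; apply: eq_bigr => i _; rewrite mxE expr2.
rewrite lt_def; apply/andP; split; last by apply: sumr_ge0 => i _; rewrite sqr_ge0.
apply/eqP => h; move/eqP: yn0; apply; apply/matrixP => i j.
have h2 := @psumr_eq0P _ _ xpredT (fun i => y i 0 ^+ 2) (fun i _ => sqr_ge0 (y i 0)) h i isT.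
by rewrite (ord1 j) mxE; apply/eqP; rewrite -sqrf_eq0 h2.
Qed.


Lemma short n (A : 'M[R]_(1 + n)) (Au : A \in unitmx)
  (Gm : set 'cV[R]_(1 + n)) (hp : primitive_subgroup Gm)
  k (M : 'M[R]_(1 + n, k)) (hb : is_basis Gm M) :
  exists k', k = k'.+1 /\ exists w, Gm w /\ w != 0 /\
    ((A *m w)^T *m (A *m w)) 0 0 ^+ k <= @Ch R k' * covol (A *m M) ^+ 2.
Proof.
case: hb => hrk hGZ.
case: k M hrk hGZ => [|k] M hrk hGZ.
  exfalso; case: hp => _ [hne _]; apply: hne; rewrite hGZ.
  apply/seteqP; split => x.
    by case=> z _ <-; rewrite thinmx0 mul0mx.
  by move=> ->; exists 0 => //; rewrite thinmx0 mul0mx.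
exists k; split => //.
have [B hB] : exists B, B *m M = 1%:M by apply/row_fullP; rewrite /row_full hrk.
have Minj : forall z : 'cV[R]_k.+1, z != 0 -> A *m (M *m z) != 0.
  move=> z zn0; apply/eqP => h; move/eqP: zn0; apply.
  have h1 : M *m z = 0 by rewrite -(mulKmx Au (M *m z)) h mulmx0.
  by rewrite -(mul1mx z) -hB -mulmxA h1 mulmx0.
pose Gr := (A *m M)^T *m (A *m M).
have Grs : Gr^T = Gr by rewrite /Gr trmx_mul trmxK.
have hq : forall z, qf Gr z = ((A *m (M *m z))^T *m (A *m (M *m z))) 0 0.
  by move=> z; rewrite /qf /Gr !mulmxA !trmx_mul !mulmxA.
have Grpd : PD Gr by move=> z zn0; rewrite hq; apply: sumsq_pos; apply: Minj.
have [dpos [zi [zin0 hzi]]] := hermite Grs Grpd.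
exists (M *m zr R zi); split; first by rewrite hGZ; exists zi.
split.
  apply/eqP => h; move: (Minj (zr R zi)); rewrite zr_eq0 zin0 h mulmx0 eqxx.
  by move=> /(_ isT).
rewrite -hq /covol sqr_sqrtr; last exact: ltW.
exact: hzi.
Qed.


Definition rr n (y : 'rV[R]_n) (q : 'rV[int]_n) (p : int) : R :=
  \sum_(i < n) y 0 i * (q 0 i)%:~R + p%:~R.
Definition ss n (q : 'rV[int]_n) : R := \sum_(i < n) ((q 0 i)%:~R) ^+ 2.

Lemma extract n (y : 'rV[R]_n) (w : 'cV[R]_(1 + n)) : int_vec w -> w != 0 ->
  exists (q : 'rV[int]_n) (p : int), (q != 0 \/ p != 0) /\
    usubmx w 0 0 + (y *m dsubmx w) 0 0 = rr y q p /\
    ((dsubmx w)^T *m dsubmx w) 0 0 = ss q.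
Proof.
move=> wi wn0.
have hint : forall i, w i 0 = (Num.floor (w i 0))%:~R.
  by move=> i; have [z ->] := wi i; rewrite intrKfloor.
pose p := Num.floor (usubmx w 0 0).
pose q : 'rV[int]_n := \row_j Num.floor (dsubmx w j 0).
have hp : usubmx w 0 0 = p%:~R by rewrite /p mxE -hint.
have hq : forall j, dsubmx w j 0 = (q 0 j)%:~R by move=> j; rewrite /q !mxE -hint.
exists q, p; split; last split.
- case: (eqVneq p 0) => [p0|]; last by right.
  case: (eqVneq q 0) => [q0|]; last by left.
  exfalso; move/eqP: wn0; apply; rewrite -[w]vsubmxK.
  have -> : usubmx w = 0.
    by apply/matrixP => i j; rewrite !ord1 hp p0 mxE.
  have -> : dsubmx w = 0.
    by apply/matrixP => i j; rewrite (ord1 j) hq q0 !mxE.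
  by rewrite col_mx0.
- rewrite /rr hp addrC; congr (_ + _); rewrite mxE.
  by apply: eq_bigr => j _; rewrite hq.
- rewrite /ss mxE; apply: eq_bigr => j _; rewrite mxE hq expr2.
  by [].
Qed.

Lemma dist_int (r : R) : (forall p : int, r + p%:~R != 0) ->
  exists2 de, 0 < de & forall p : int, de <= `|r + p%:~R|.
Proof.
move=> hr; set fl := Num.floor r.
have f1 := floor_le r; have f2 := floorD1_gt r.
rewrite -/fl intrD in f2.
have hne : r - fl%:~R != 0 by have := hr (- fl); rewrite intrN.
exists (Num.min (r - fl%:~R) (1 - (r - fl%:~R))).
  rewrite lt_min; apply/andP; split; last by lra.
  by rewrite lt_def hne /=; lra.
move=> p; case: (leP (- fl) p) => hp.
  have : (- fl)%:~R <= p%:~R :> R by rewrite ler_int.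
  rewrite intrN => hp'.
  rewrite ge_min; apply/orP; left.
  by rewrite ger0_norm; lra.
have : p%:~R <= (- fl - 1)%:~R :> R by rewrite ler_int -ltzD1 subrK.
rewrite intrB intrN => hp'.
rewrite ge_min; apply/orP; right.
by rewrite ltr0_norm; lra.
Qed.


Lemma sum_elem (T : eqType) (s : seq T) (F : T -> R) x :
  (forall z, 0 <= F z) -> x \in s -> F x <= \sum_(z <- s) F z.
Proof.
move=> F0; elim: s => // a s IH; rewrite inE big_cons => /orP [/eqP ->|h].
  by have := sumr_ge0 s (fun z _ => F0 z) (P := xpredT); lra.
by have := IH h; have := F0 a; lra.
Qed.

Lemma ss_ge1 n (q : 'rV[int]_n) : q != 0 -> 1 <= ss q.
Proof.
move=> qn0.
have [j hj] : exists j, q 0 j != 0.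
  apply: contrapT => hn; move/eqP: qn0; apply; apply/matrixP => i j.
  rewrite (ord1 i) mxE; apply/eqP; apply: contrapT => h; apply: hn.
  by exists j; apply/negP.
rewrite /ss (bigD1 j) //=.
have := intsq_ge1 R hj.
have : 0 <= \sum_(i < n | i != j) ((q 0 i)%:~R : R) ^+ 2.
  by apply: sumr_ge0 => i _; apply: sqr_ge0.
lra.
Qed.

Lemma eucl_ge1 n (q : 'rV[int]_n) : q != 0 -> 1 <= eucl_norm R q.
Proof.
move=> qn0; rewrite /eucl_norm -[X in X <= _]sqrtr1 ler_sqrt.
  exact: ss_ge1.
by apply: sumr_ge0 => i _; apply: sqr_ge0.
Qed.

Lemma ss_scale n (m : int) (q : 'rV[int]_n) : ss (m *: q) = (m%:~R) ^+ 2 * ss q.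
Proof.
rewrite /ss mulr_sumr; apply: eq_bigr => i _; rewrite mxE intrM; ring.
Qed.

Lemma rr_scale n (y : 'rV[R]_n) (m p : int) (q : 'rV[int]_n) :
  rr y (m *: q) (m * p) = m%:~R * rr y q p.
Proof.
rewrite /rr mulrDr intrM mulr_sumr; congr (_ + _).
by apply: eq_bigr => i _; rewrite mxE intrM; ring.
Qed.

Lemma W_of n (y : 'rV[R]_n) (u : R) (hu : 0 < u) :
  (forall T : R, exists (q : 'rV[int]_n) (p : int), q != 0 /\
     `|rr y q p| < eucl_norm R q `^ (- u) /\ `|rr y q p| < expR (- T)) ->
  W_set u y.
Proof.
move=> H hfin.
have [s hs] := (finite_seqP _).1 hfin.
suff [q [[p Sq] qs]] : exists q : 'rV[int]_n, (exists p : int,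
    `|\sum_(i < n) y 0 i * (q 0 i)%:~R + p%:~R| < eucl_norm R q `^ (- u))
    /\ q \notin s.
  have : [set` s] q by rewrite -hs; exists p.
  by rewrite /= (negbTE qs).
case: (pselect (exists (q0 : 'rV[int]_n) (p0 : int), q0 != 0 /\ rr y q0 p0 = 0)).
  move=> [q0 [p0 [q0n0 hr0]]].
  set Bs := \sum_(z <- s) eucl_norm R z.
  have Bs0 : 0 <= Bs by apply: sumr_ge0 => z _; apply: sqrtr_ge0.
  set m := Num.floor Bs + 1.
  have hm : Bs < m%:~R by rewrite /m; apply: floorD1_gt.
  have m1 : 1 <= m by rewrite /m lerDr floor_ge0.
  have m1R : 1 <= m%:~R :> R by rewrite ler1z.
  have mn0 : m != 0 by apply/eqP => h; rewrite h in m1.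
  have hq : eucl_norm R (m *: q0) = m%:~R * eucl_norm R q0.
    rewrite /eucl_norm -/(ss (m *: q0)) -/(ss q0) ss_scale sqrtrM ?sqr_ge0 //.
    by rewrite sqrtr_sqr ger0_norm //; lra.
  have e1 := eucl_ge1 q0n0.
  exists (m *: q0); split.
    exists (m * p0); rewrite -/(rr y (m *: q0) (m * p0)) rr_scale hr0 mulr0 normr0.
    apply: powR_gt0; rewrite hq; apply: mulr_gt0; lra.
  apply/negP => hin.
  have := @sum_elem _ s (fun z => eucl_norm R z) _ (fun z => sqrtr_ge0 _) hin.
  rewrite -/Bs hq => h.
  have : m%:~R <= m%:~R * eucl_norm R q0 :> R by rewrite ler_peMr //; lra.
  lra.
move=> hB.
have hd : exists2 de : R, 0 < de & forall q, q \in s -> q != 0 ->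
    forall p : int, de <= `|rr y q p|.
  elim: s {hs hfin} => [|a s [de de0 IH]].
    by exists 1 => //.
  case: (eqVneq a 0) => [a0|an0].
    exists de => // q; rewrite inE => /orP [/eqP -> |]; last exact: IH.
    by rewrite a0 eqxx.
  have hr : forall p : int, \sum_(i < n) y 0 i * (a 0 i)%:~R + p%:~R != 0.
    by move=> p; apply/eqP => h; apply: hB; exists a, p; split.
  have [de' de'0 hde'] := dist_int hr.
  exists (Num.min de de'); first by rewrite lt_min de0 de'0.
  move=> q; rewrite inE => /orP [/eqP -> |qs] qn0 p.
    by rewrite ge_min (hde' p) orbT.
  by rewrite ge_min (IH q qs qn0 p).
have [de de0 hde] := hd.
have [q [p [qn0 [h1 h2]]]] := H (- ln de).
rewrite opprK lnK ?posrE // in h2.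
exists q; split; first by exists p.
apply/negP => qs; have := hde q qs qn0 p; lra.
Qed.


Lemma sq_lt (r Y : R) : 0 <= Y -> r ^+ 2 < Y ^+ 2 -> `|r| < Y.
Proof.
move=> Y0 h; case: (ltP `|r| Y) => // h'.
have := real_normK (num_real r); have := normr_ge0 r; nra.
Qed.

Lemma expR2 (a : R) : expR a ^+ 2 = expR (2 * a).
Proof. by rewrite -expRM_natr mulrC. Qed.

Lemma to_H n (hn : (0 < n)%N) (y : 'rV[R]_n) (Kc d u : R) (hK : 1 <= Kc)
  (hd : 0 < d) (hu : 0 < u) (hg : 0 < (1 + d) - u * (n%:R^-1 - d))
  (Hy : forall T, 0 < T -> exists t, T <= t /\ exists (q : 'rV[int]_n) (p : int),
      (q != 0 \/ p != 0) /\
      (expR t * rr y q p) ^+ 2 + expR (- (t / n%:R)) ^+ 2 * ss q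
         <= Kc * expR (- (d * t)) ^+ 2) :
  forall T : R, exists (q : 'rV[int]_n) (p : int), q != 0 /\
     `|rr y q p| < eucl_norm R q `^ (- u) /\ `|rr y q p| < expR (- T).
Proof.
move=> T'.
set L := ln Kc.
have L0 : 0 <= L by apply: ln_ge0.
have KL : Kc = expR L by rewrite /L lnK // posrE; lra.
set g := (1 + d) - u * (n%:R^-1 - d).
have hg' : 0 < g := hg.
set T0 := 1 + `|T'| + (1 + u) * L / g + L.
have hT1 : 0 <= (1 + u) * L / g by rewrite divr_ge0 ?mulr_ge0 //; lra.
have nT : 0 <= `|T'| by [].
have T00 : 0 < T0 by rewrite /T0; lra.
have [t [ht [q [p [hnz hb]]]]] := Hy T0 T00.
set r := rr y q p in hb *. set s := ss q in hb *.
have t0 : 0 < t by lra.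
have ht' : 1 + `|T'| + (1 + u) * L / g + L <= t := ht.
have dt0 : 0 <= d * t by rewrite mulr_ge0 //; lra.
have s0 : 0 <= s by apply: sumr_ge0 => i _; apply: sqr_ge0.
have hX0 : 0 <= expR (- (t / n%:R)) ^+ 2 * s by rewrite mulr_ge0 // sqr_ge0.
have hr2 : r ^+ 2 <= expR (L - 2 * (d * t) - 2 * t).
  have E1 : expR (L - 2 * (d * t) - 2 * t) * expR t ^+ 2 = Kc * expR (- (d * t)) ^+ 2.
    by rewrite KL !expR2 -!expRD; congr expR; ring.
  have h1 : r ^+ 2 * expR t ^+ 2 <= expR (L - 2 * (d * t) - 2 * t) * expR t ^+ 2.
    rewrite E1; rewrite exprMn mulrC in hb; lra.
  by rewrite ler_pM2r ?exprn_gt0 ?expR_gt0 in h1.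
have hs : s <= expR (L - 2 * (d * t) + 2 * (t / n%:R)).
  have E2 : expR (L - 2 * (d * t) + 2 * (t / n%:R)) * expR (- (t / n%:R)) ^+ 2
      = Kc * expR (- (d * t)) ^+ 2.
    by rewrite KL !expR2 -!expRD; congr expR; ring.
  have h1 : s * expR (- (t / n%:R)) ^+ 2 <=
      expR (L - 2 * (d * t) + 2 * (t / n%:R)) * expR (- (t / n%:R)) ^+ 2.
    rewrite E2; have : 0 <= (expR t * r) ^+ 2 by apply: sqr_ge0.
    rewrite mulrC; lra.
  by rewrite ler_pM2r ?exprn_gt0 ?expR_gt0 in h1.
have hsmall : L - 2 * (d * t) - 2 * t < - (2 * T').
  have : T' <= `|T'| by apply: ler_norm.
  rewrite /T0 in ht; lra.
have hq0 : q != 0.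
  case: hnz => // hp; apply/eqP => hq.
  have hr : r = p%:~R.
    rewrite /r /rr hq big1 ?add0r // => i _; rewrite mxE mulr0.
    by [].
  have := intsq_ge1 R hp; rewrite -hr => h1.
  have : expR (L - 2 * (d * t) - 2 * t) < 1.
    by rewrite expR_lt1; lra.
  lra.
exists q, p; split => //; split; last first.
  apply: sq_lt; first exact: expR_ge0.
  by rewrite expR2; apply: (le_lt_trans hr2); rewrite ltr_expR; lra.
have s1 : 1 <= s := ss_ge1 hq0.
set N := eucl_norm R q.
have hN : N ^+ 2 = s by rewrite /N /eucl_norm sqr_sqrtr.
have N0 : 0 < N by rewrite /N; have := eucl_ge1 hq0; lra.
have hpow : N `^ (- u) = expR (- u * ln N) by rewrite /powR gt_eqF.
rewrite hpow; apply: sq_lt; first exact: expR_ge0.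
rewrite expR2; apply: (le_lt_trans hr2); rewrite ltr_expR.
have hlnN : 2 * ln N = ln s.
  by rewrite -hN lnXn // mulr2n; ring.
have hlns : ln s <= L - 2 * (d * t) + 2 * (t / n%:R).
  by rewrite -[X in _ <= X]expRK ler_ln ?posrE ?expR_gt0 //; lra.
have key : (1 + u) * L < 2 * (g * t).
  have hgt : g * T0 <= g * t by rewrite ler_pM2l.
  have : g * T0 = g * (1 + `|T'| + L) + (1 + u) * L.
    by rewrite /T0; field; apply: lt0r_neq0.
  have : 0 <= g * (`|T'| + L) by apply: mulr_ge0; lra.
  have : 0 <= u * L by apply: mulr_ge0; lra.
  nra.
have eqg : g * t = t + d * t - u * (t / n%:R) + u * (d * t) by rewrite /g; ring.
have : - u * (2 * ln N) >= - u * (L - 2 * (d * t) + 2 * (t / n%:R)).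
  by rewrite hlnN ler_wnM2l //; lra.
have : -u * (L - 2 * (d * t) + 2 * (t / n%:R)) =
   - (u * L) + 2 * (u * (d * t)) - 2 * (u * (t / n%:R)) by ring.
have : (1 + u) * L = L + u * L by ring.
nra.
Qed.


Lemma Ch_ge1 k : 1 <= @Ch R k.
Proof.
elim: k => [|k IH] /=; first lra.
have : 1 <= 4 ^+ k.+1 :> R by rewrite exprn_ege1 //; lra.
nra.
Qed.

Lemma Ch_mono k m : (k <= m)%N -> @Ch R k <= @Ch R m.
Proof.
elim: m => [|m IH]; first by rewrite leqn0 => /eqP ->.
rewrite leq_eqVlt => /orP [/eqP -> //|]; rewrite ltnS => /IH h /=.
have : 1 <= 4 ^+ m.+1 :> R by rewrite exprn_ege1 //; lra.
have := Ch_ge1 m; nra.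
Qed.

Lemma root_bound (X Y C : R) m : 0 <= X -> 0 < Y -> 1 <= C ->
  X ^+ m.+1 <= C * Y ^+ m.+1 -> X <= C * Y.
Proof.
move=> X0 Y0 C1 h; case: (leP X (C * Y)) => // hlt; exfalso.
have h1 : (C * Y) ^+ m.+1 < X ^+ m.+1.
  by rewrite ltrXn2r // ?nnegrE //; apply: mulr_ge0; lra.
have h2 : C <= C ^+ m.+1 by rewrite exprS ler_peMr // ?exprn_ege1 //; lra.
rewrite exprMn in h1.
have : C * Y ^+ m.+1 <= C ^+ m.+1 * Y ^+ m.+1.
  by rewrite ler_pM2r // exprn_gt0.
lra.
Qed.

End Mat.
Unset Implicit Arguments. Set Strict Implicit.

Theorem lemma4p1 (R : realType) (n : nat) (hn : (0 < n)%N)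
  (B : pseudoPMetricType R) (hB : hausdorff_space B)
  (mu : {measure set (g_sigma_algebraType (@open B)) -> \bar R})
  (c v : R) (hc : 0 < c) (hv : 0 < v)
  (hcv : c = (v - n%:R) / (n%:R * (v + 1)))
  (f : B -> 'rV[R]_n)
  (hfail : ~ (forall d : R, c < d -> exists T : R, 0 < T /\
        forall t : R, T <= t ->
        forall (G : set 'cV[R]_(1 + n)), primitive_subgroup G ->
        forall (k : nat) (M : 'M[R]_(1 + n, k)), is_basis G M ->
          ((expR (- (k%:R * d * t)))%:E <=
             supnorm mu (fun x => covol (g_mx n t *m u_mx (f x) *m M)))%E)) :
  exists u : R, v < u /\ f @` (supp mu) `<=` W_set u.
Proof.
have n0 : 0 < n%:R :> R by rewrite ltr0n.
have den : 0 < n%:R * (v + 1) by apply: mulr_gt0; lra.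
have hvn : n%:R < v.
  have e : v - n%:R = c * (n%:R * (v + 1)).
    by rewrite hcv; field; apply/andP; split; apply: lt0r_neq0; lra.
  have : 0 < c * (n%:R * (v + 1)) by apply: mulr_gt0.
  lra.
have [d [hd Hd]] : exists d, c < d /\ forall T, 0 < T -> exists t, T <= t /\
    exists G : set 'cV[R]_(1 + n), primitive_subgroup G /\
    exists k (M : 'M[R]_(1 + n, k)), is_basis G M /\
    (supnorm mu (fun x => covol (g_mx n t *m u_mx (f x) *m M))
       < (expR (- (k%:R * d * t)))%:E)%E.
  apply: contrapT => hn'; apply: hfail => d hd.
  apply: contrapT => hT; apply: hn'; exists d; split => // T T0.
  apply: contrapT => ht; apply: hT; exists T; split => // t Tt G hG k M hM.
  rewrite leNgt; apply/negP => hlt; apply: ht.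
  by exists t; split => //; exists G; split => //; exists k, M.
have hd0 : 0 < d by lra.
pose u := v + (d - c).
have hu : 0 < u by rewrite /u; lra.
exists u; split; first by rewrite /u; lra.
have ninv : n%:R^-1 <= 1 :> R by rewrite invf_le1 // ler1n.
have hg : 0 < (1 + d) - u * (n%:R^-1 - d).
  have e : (1 + d) - u * (n%:R^-1 - d) = (d - c) * (1 + v - n%:R^-1 + d).
    rewrite /u hcv; field.
    by rewrite !lt0r_neq0 //=; lra.
  rewrite e; apply: mulr_gt0; lra.
move=> _ [x xs <-].
apply: (W_of hu).
apply: (to_H hn (Kc := @Ch R n) (Ch_ge1 R n) hd0 hu hg).
move=> T T0.
have [t [Tt [G [hG [k [M [hM hlt]]]]]]] := Hd T T0.
exists t; split => //.
set A := g_mx n t *m u_mx (f x).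
have [k' [hk [w [Gw [wn0 hw]]]]] := short (@A_unit R n t (f x)) hG hM.
subst k.
have hx : ((`|covol (A *m M)|)%:E <=
    supnorm mu (fun x => covol (g_mx n t *m u_mx (f x) *m M)))%E.
  by apply: ereal_sup_ubound; exists x.
have hcov : covol (A *m M) < expR (- (k'.+1%:R * d * t)).
  have := le_lt_trans hx hlt; rewrite lte_fin ger0_norm //.
  exact: sqrtr_ge0.
have cov0 : 0 <= covol (A *m M) by apply: sqrtr_ge0.
have hkn : (k' <= n)%N.
  by have := rank_leq_row M; rewrite hM.1.
have hY : expR (- (k'.+1%:R * d * t)) ^+ 2 = (expR (- (d * t)) ^+ 2) ^+ k'.+1.
  by rewrite -exprM -expRM_natr -expRM_natr; congr expR; rewrite natrM; ring.
have hX0 : 0 <= ((A *m w)^T *m (A *m w)) 0 0.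
  rewrite mxE; apply: sumr_ge0 => i _; rewrite mxE -expr2; apply: sqr_ge0.
have hbound : ((A *m w)^T *m (A *m w)) 0 0 <= @Ch R n * expR (- (d * t)) ^+ 2.
  apply: (root_bound (m := k')) => //; first by rewrite exprn_gt0 // expR_gt0.
    exact: Ch_ge1.
  apply: (le_trans hw); rewrite -hY.
  have : covol (A *m M) ^+ 2 <= expR (- (k'.+1%:R * d * t)) ^+ 2.
    by rewrite lerXn2r // ?nnegrE ?expR_ge0 //; apply: ltW.
  have := Ch_mono R hkn; have := Ch_ge1 R k'; have : 0 <= covol (A *m M) ^+ 2 by apply: sqr_ge0.
  nra.
rewrite Aw_norm in hbound.
have [q [p [hnz [hr hs]]]] := extract (f x) (hG.1.1 w Gw) wn0.
exists q, p; split => //.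
by rewrite -hr -hs.
Qed.
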